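(* Let $\ell\ge 1$ be an integer. In the game $\mathrm{CN}(2\ell+1,\ell+1)$, every position in $$S_1=\Big\{(x,\underbrace{0,\ldots,0}_{\ell-1},x,a_1,\ldots,a_\ell)\ \Big|\ x,a_1,\dots,a_\ell\ge 0 \text{ integers},\ \sum_{i=1}^{\ell}a_i=x\Big\}$$ (up to rotation and reflection) is a $\mathcal P$-position.
   Context: Circular Nim $\mathrm{CN}(n,k)$: $n$ stacks of tokens are arranged in a circle; a position is a vector $(p_1,\dots,p_n)$ of nonnegative integers giving the stack heights in order around the circle, determined only up to rotation and reflection. A move consists of choosing $k$ cyclically consecutive stacks and removing at least one token from at least one of these $k$ stacks (any number from each chosen stack; other stacks unchanged). Under normal play the last player able to move wins. A $\mathcal P$-position is one from which the player about to move loses under optimal play. *)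

(* Defs.v *)
From mathcomp Require Import all_boot.
Set Implicit Arguments. Unset Strict Implicit. Unset Printing Implicit Defensive.

(* Circular Nim CN(n,k). A position is a sequence p of n stack heights,
   p`_0, ..., p`_(n-1), listed in order around the circle. *)

Definition in_window (n k i j : nat) : bool := (j + n - i) %% n < k.

Definition cn_move (n k : nat) (p q : seq nat) : Prop :=
  [/\ size p = n, size q = n, q <> p &
    exists2 i, i < n &
      forall j, j < n ->
        nth 0 q j <= nth 0 p j /\
        (~~ in_window n k i j -> nth 0 q j = nth 0 p j)].

(* P-positions (previous player wins) and N-positions under normal play,
   defined inductively; since every move decreases the token total the
   game is finite and this is the standard characterization. *)
Inductive cn_P (n k : nat) : seq nat -> Prop :=
  | cnP_intro p : (forall q, cn_move n k p q -> cn_N n k q) -> cn_P n k p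
with cn_N (n k : nat) : seq nat -> Prop :=
  | cnN_intro p q : cn_move n k p q -> cn_P n k q -> cn_N n k p.

Definition S1_rep (l x : nat) (a : seq nat) : seq nat :=
  x :: nseq l.-1 0 ++ x :: a.

(* Main.v *)
Require Import Defs.
From mathcomp Require Import all_boot zify.

Lemma in_windowE n k i j : i < n -> j < n ->
  in_window n k i j = (if i <= j then j - i < k else j + n - i < k).
Proof.
move=> hi hj; rewrite /in_window; case: (leqP i j) => h.
  have -> : j + n - i = (j - i) + n by lia.
  by rewrite modnDr modn_small //; lia.
by rewrite modn_small //; lia.
Qed.

Lemma move_map n k (s : seq nat -> seq nat) (f g : nat -> nat) p q :
 (forall t, size t = n -> size (s t) = n) -> injective s ->
 (forall t j, size t = n -> j < n -> nth 0 (s t) j = nth 0 t (f j)) ->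
 (forall j, j < n -> f j < n) ->
 (forall i j, i < n -> j < n -> g i < n /\ in_window n k (g i) j = in_window n k i (f j)) ->
 cn_move n k p q -> cn_move n k (s p) (s q).
Proof.
move=> Hs Hi Hn Hf Hg [sp sq nqp [i ilt H]]; split; try by apply: Hs.
  by move/Hi.
exists (g i); first by case: (Hg i i ilt ilt).
move=> j jn; rewrite !Hn //; have [_ ->] := Hg i j ilt jn; exact: H (Hf j jn).
Qed.

Lemma move_rot1 n k p q : cn_move n k p q -> cn_move n k (rot 1 p) (rot 1 q).
Proof.
move=> mv; case: (mv) => sp _ _ [i0 i0n _].
apply: (@move_map n k (rot 1) (fun j => if j.+1 < n then j.+1 else 0)
                 (fun i => if i == 0 then n.-1 else i.-1) p q _ _ _ _ _ mv).
- by move=> t; rewrite size_rot.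
- exact: rot_inj.
- move=> [|y t] j st jn; first by rewrite -st in jn.
  rewrite rot1_cons nth_rcons; move: st => /= st.
  case: ifP => h1; first by rewrite ifT //; lia.
  case: ifP => h2; first by rewrite ifF //; lia.
  lia.
- move=> j jn; case: ifP => //; lia.
- move=> i j il jl; split; first by case: ifP; lia.
  rewrite !in_windowE //; try solve [lia | case: ifP => ?; lia].
  case: (i =P 0) => [->|/eqP iz]; case: (ltnP j.+1 n) => h; repeat (case: ifP => ?); try (apply/idP/idP => ?); lia.
Qed.

Lemma move_rev n k p q : 0 < k <= n -> cn_move n k p q -> cn_move n k (rev p) (rev q).
Proof.
move=> kn mv; case: (mv) => sp _ _ [i0 i0n _].
apply: (@move_map n k rev (fun j => n - j.+1)
                 (fun i => if i + k <= n then n - i - k else 2 * n - i - k) p q _ _ _ _ _ mv).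
- by move=> t; rewrite size_rev.
- exact: (can_inj revK).
- by move=> t j st jn; rewrite nth_rev st.
- move=> j jn; lia.
- move=> i j il jl.
  have gl : (if i + k <= n then n - i - k else 2 * n - i - k) < n by case: ifP => ?; lia.
  split => //.
  have fl : n - j.+1 < n by lia.
  rewrite !in_windowE //.
  clear gl fl; case: (leqP (i + k) n) => h; repeat (case: ifP => ?); apply/idP/idP => ?; lia.
Qed.

Lemma move_rot n k r p q : cn_move n k p q -> cn_move n k (rot r p) (rot r q).
Proof.
move=> mv; case: (mv) => sp sq _ _.
case: (leqP n r) => h.
  by rewrite !rot_oversize // ?sp ?sq.
elim: r h => [|r IH] h; first by rewrite !rot0.
rewrite (rotS (s := p)) ?sp; last lia; rewrite (rotS (s := q)) ?sq; last lia.
apply: move_rot1; apply: IH; lia.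
Qed.

Lemma move_rotr n k r p q : cn_move n k p q -> cn_move n k (rotr r p) (rotr r q).
Proof.
move=> mv; case: (mv) => sp sq _ _.
by rewrite /rotr sp sq; apply: move_rot.
Qed.

Scheme cn_P_ind2 := Induction for cn_P Sort Prop
with cn_N_ind2 := Induction for cn_N Sort Prop.

Lemma cnP_sym n k (s t : seq nat -> seq nat) :
  (forall p q, cn_move n k p q -> cn_move n k (s p) (s q)) ->
  (forall p q, cn_move n k p q -> cn_move n k (t p) (t q)) ->
  cancel s t -> cancel t s ->
  forall p, cn_P n k p -> cn_P n k (s p).
Proof.
move=> Hs Ht st ts p HP.
apply: (@cn_P_ind2 n k (fun p _ => cn_P n k (s p)) (fun p _ => cn_N n k (s p))) HP.
- move=> P HP IH; constructor => q' mv'.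
  have mv : cn_move n k P (t q') by have := Ht _ _ mv'; rewrite st.
  by have := IH _ mv; rewrite ts.
- move=> P Q mv HQ IH; exact: cnN_intro (Hs _ _ mv) IH.
Qed.

Definition R (l u v : nat) (b : seq nat) : seq nat := u :: nseq l.-1 0 ++ v :: b.

Lemma size_R l u v b : 1 <= l -> size (R l u v b) = l + 1 + size b.
Proof. move=> hl; rewrite /R /= size_cat size_nseq /=; lia. Qed.

Lemma nth_R l u v b j : 1 <= l ->
  nth 0 (R l u v b) j = if j == 0 then u else if j < l then 0 else
                        if j == l then v else nth 0 b (j - l.+1).
Proof.
move=> hl; rewrite /R; case: j => [|j] //=.
rewrite nth_cat size_nseq nth_nseq.
case: (ltnP j l.-1) => h1.
  by rewrite /=; have -> : (j.+1 < l) = true by apply/idP; lia.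
rewrite /=; have -> : (j.+1 < l) = false by apply/negbTE; rewrite -leqNgt; lia.
case E: (j - l.-1) => [|m] /=.
  by have -> : (j.+1 == l) = true by apply/eqP; lia.
have -> : (j.+1 == l) = false by apply/negbTE/eqP; lia.
congr nth; lia.
Qed.

Lemma drop_R l u v b : 1 <= l -> drop l.+1 (R l u v b) = b.
Proof.
case: l => [//|l] _; rewrite /R /= drop_cat size_nseq.
by rewrite ltnNge leqnSn /= subSnn /= drop0.
Qed.

Lemma le_sum_eq (a b : seq nat) : size b = size a ->
  (forall j, nth 0 b j <= nth 0 a j) ->
  sumn b <= sumn a /\ (sumn b = sumn a -> b = a).
Proof.
elim: a b => [|y a IH] [|z b] //= [sb] H.
have [h1 h2] := IH b sb (fun j => H j.+1).
have H0 : z <= y := H 0; split; first lia.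
move=> e; have e1 : sumn b = sumn a by lia.
by rewrite (h2 e1); congr cons; lia.
Qed.

Lemma exists_sub (b : seq nat) m : m <= sumn b ->
  exists b', [/\ size b' = size b, sumn b' = m & forall j, nth 0 b' j <= nth 0 b j].
Proof.
elim: b m => [|y b IH] m /=.
  rewrite leqn0 => /eqP ->; by exists [::].
move=> hm; case: (leqP m (sumn b)) => h.
  have [b' [s1 s2 s3]] := IH m h.
  exists (0 :: b'); split => //=; [by rewrite s1 | by case].
have [b' [s1 s2 s3]] := IH (sumn b) (leqnn _).
exists ((m - sumn b) :: b'); split => //=; first by rewrite s1.
  lia.
case => //=; lia.
Qed.

Lemma in_window_bnd n k i j : i < n -> j < n ->
  in_window n k i j = (if i <= j then j - i < k else j + n - i < k).
Proof. exact: in_windowE. Qed.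

Lemma step l x a q : 1 <= l -> size a = l -> sumn a = x ->
  cn_move (2*l+1) (l+1) (R l x x a) q ->
  exists m b', [/\ m < x, size b' = l, sumn b' = m & cn_move (2*l+1) (l+1) q (R l m m b')].
Proof.
move=> hl sa sx [sp sq nqp [i il H]].
set u := nth 0 q 0; set v := nth 0 q l; set b := drop l.+1 q.
have Hj : forall j, j < 2*l+1 -> nth 0 q j <= nth 0 (R l x x a) j
  := fun j jl => (H j jl).1.
have Hj' : forall j, j < 2*l+1 -> ~~ in_window (2*l+1) (l+1) i j ->
   nth 0 q j = nth 0 (R l x x a) j := fun j jl => (H j jl).2.
have sb : size b = l by rewrite size_drop sq; lia.
have Eq : q = R l u v b.
  apply: (@eq_from_nth _ 0); first by rewrite size_R // sb sq; lia.
  move=> j; rewrite sq => jl; rewrite nth_R //.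
  case: eqP => [->//|j0]; case: ifP => jl2.
    have := Hj j jl; rewrite nth_R //; case: eqP => // _; rewrite jl2; lia.
  case: eqP => [->//|jl3]; rewrite /b nth_drop; congr nth; lia.
have hu : u <= x by have := Hj 0; rewrite nth_R //; apply; lia.
have hv : v <= x.
  have := Hj l; rewrite nth_R // ltnn eqxx; case: eqP => [?|_]; first lia.
  apply; lia.
have hb : forall j, nth 0 b j <= nth 0 a j.
  move=> j; case: (ltnP j l) => hj; last by rewrite !nth_default ?sb ?sa.
  have := Hj (l.+1 + j); rewrite nth_R // /b nth_drop.
  case: eqP => [?|_]; first lia. case: ifP => ?; first lia.
  case: eqP => [?|_]; first lia. have -> : l.+1 + j - l.+1 = j by lia.
  apply; lia.
have [sbl sbe] := @le_sum_eq a b (etrans sb (esym sa)) hb.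
have key : u = x \/ v = x \/ b = a.
  case: (i =P 0) => [i0|i0].
    right; right; apply: (@eq_from_nth _ 0); first by rewrite sb sa.
    move=> j; rewrite sb => jl.
    have := Hj' (l.+1 + j); rewrite nth_R // /b nth_drop in_windowE; try lia.
    rewrite i0 /=.
    case: eqP => [?|_]; first lia. case: ifP => ?; first lia.
    have -> : l.+1 + j - l.+1 = j by lia.
    move=> h; apply: h; lia.
  case: (leqP i l) => hi.
    left; have := Hj' 0; rewrite nth_R // in_windowE; try lia.
    case: ifP => ?; first lia. move=> h; apply: h; lia.
  right; left; have := Hj' l; rewrite nth_R // in_windowE; try lia.
  rewrite ltnn eqxx; case: eqP => [?|_]; first lia.
  case: ifP => ?; first lia. move=> h; apply: h; lia.
have qp : u = x -> v = x -> sumn b = x -> False.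
  move=> e1 e2 e3; apply: nqp; rewrite Eq e1 e2 (sbe _) //; lia.
set s := sumn b; set m := minn u (minn v s).
have mx : m < x.
  case: (ltnP m x) => // h; exfalso; apply: qp; rewrite /s; lia.
have [b' [sb' sm hb']] := @exists_sub b m (ltac:(rewrite /m /s; lia)).
exists m, b'; split => //; first by rewrite sb'.
split.
- by rewrite sq.
- by rewrite size_R // sb' sb; lia.
- move=> E.
  have e0 : m = u by have := congr1 (nth 0 ^~ 0) E; rewrite Eq !nth_R.
  have el : m = v.
    have := congr1 (nth 0 ^~ l) E; rewrite Eq !nth_R // ltnn eqxx.
    by case: eqP => [?|_]; first lia.
  have eb : b' = b by have := congr1 (drop l.+1) E; rewrite Eq !drop_R.
  have es : s = m by rewrite /s -eb.
  case: key => [|[|]] h; try lia.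
  move: es; rewrite /s h; lia.
- case: (eqVneq u m) => [hum|hum].
    exists l; first lia.
    move=> j jl; rewrite Eq !nth_R // in_windowE; try lia.
    have := hb' (j - l.+1).
    repeat (case: ifP => ?); move=> ?; split => [|?]; rewrite /m in hum *; lia.
  case: (eqVneq v m) => [hvm|hvm].
    exists l.+1; first lia.
    move=> j jl; rewrite Eq !nth_R // in_windowE; try lia.
    have := hb' (j - l.+1).
    repeat (case: ifP => ?); move=> ?; split => [|?]; rewrite /m in hvm *; lia.
  have hsm : s = m by move: hum hvm; rewrite /m /s; lia.
  have eb : b' = b.
    have [_ ] := @le_sum_eq b b' sb' hb'; apply; rewrite sm; lia.
  exists 0; first lia.
  move=> j jl; rewrite Eq eb !nth_R // in_windowE ?leq0n /=; try lia.
  repeat (case: ifP => ?); split => [|?]; rewrite /m in hsm hum hvm *; lia.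
Qed.

Lemma mainP l : 1 <= l -> forall x a, size a = l -> sumn a = x ->
  cn_P (2 * l + 1) (l + 1) (R l x x a).
Proof.
move=> hl x; elim/ltn_ind: x => x IH a sa sx.
constructor => q mv.
have [m [b' [mx sb' sm mv']]] := @step l x a q hl sa sx mv.
exact: cnN_intro mv' (IH m mx b' sb' sm).
Qed.

Theorem lemma5 (l x : nat) (a : seq nat) (r : nat) (refl : bool) :
  1 <= l -> size a = l -> sumn a = x ->
  cn_P (2 * l + 1) (l + 1)
    (rot r (if refl then rev (S1_rep l x a) else S1_rep l x a)).
Proof.
move=> hl sa sx.
have H0 : cn_P (2 * l + 1) (l + 1) (S1_rep l x a) by exact: mainP.
have kn : 0 < l + 1 <= 2 * l + 1 by apply/andP; split; lia.
have H1 : cn_P (2 * l + 1) (l + 1) (if refl then rev (S1_rep l x a) else S1_rep l x a).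
  case: refl => //.
  apply: (@cnP_sym _ _ rev rev) H0.
  - by move=> p q; apply: move_rev.
  - by move=> p q; apply: move_rev.
  - exact: revK.
  - exact: revK.
apply: (@cnP_sym _ _ (rot r) (rotr r)) H1.
- by move=> p q; apply: move_rot.
- by move=> p q; apply: move_rotr.
- exact: rotK.
- exact: rotrK.
Qed.
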